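(* Let $(R,\mathfrak m)$ be a noetherian local ring, $\nu$ a valuation centered on $R$, $\nu=\nu_1\circ\nu_2$ a decomposition with $\mathfrak p=\mathfrak C_{\nu_1}(R)$, and assume $I=\mathrm{Nil}(R)$ is the only associated prime ideal of $R$. Let $y_1,\ldots,y_r,y_{r+1},\ldots,y_{r+s}$ generate $\mathfrak p$ and let $b\in R\setminus\mathfrak p$. Let $\pi:R\to R^{(1)}$ be the local blowing up with respect to $\nu$ along $(b,y_1,\ldots,y_r)$, and set $y_i^{(1)}=\pi(y_i)/b$ for $1\le i\le r$ and $y^{(1)}_{r+k}=\pi(y_{r+k})$ for $1\le k\le s$. Then $\mathfrak p^{(1)}=\mathfrak C_{\nu_1}(R^{(1)})$ is generated by $y_1^{(1)},\ldots,y_{r+s}^{(1)}$.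
   Context: All rings are commutative noetherian with $1$; $\mathrm{Nil}(A)$ is the nilradical of $A$. A valuation on a ring $R$ is a map $\nu:R\to\Gamma\cup\{\infty\}$ ($\Gamma$ an ordered abelian group) with $\nu(ab)=\nu(a)+\nu(b)$, $\nu(a+b)\ge\min\{\nu(a),\nu(b)\}$, $\nu(1)=0$, $\nu(0)=\infty$, whose support $\mathrm{supp}(\nu)=\{a:\nu(a)=\infty\}$ is a minimal prime ideal; it extends to localizations at multiplicative sets disjoint from the support via $\nu(a/s)=\nu(a)-\nu(s)$ and restricts to subrings, implicitly. $\nu$ has a center on $R$ if $\nu\ge0$ on $R$; its center is $\mathfrak C_\nu(R)=\{a:\nu(a)>0\}$. $\nu$ is centered on $(R,\mathfrak m)$ if $\nu\ge0$ on $R$ and $\nu>0$ on $\mathfrak m$. $\nu R$ is the subgroup of $\Gamma$ generated by the finite values of $\nu$. Local blowing up: for $b\in R\setminus\mathrm{supp}(\nu)$ let $J(b)=\bigcup_{i\ge1}\mathrm{ann}_R(b^i)$, so $R/J(b)\subseteq R_b$. Given $a_1,\ldots,a_r\in R$ with $\nu(a_i)\ge\nu(b)$, let $R'=(R/J(b))[a_1/b,\ldots,a_r/b]\subseteq R_b$ and $R^{(1)}=R'_{\mathfrak C_\nu(R')}$; the canonical map $R\to R^{(1)}$ is the local blowing up of $R$ with respect to $\nu$ along $(b,a_1,\ldots,a_r)$. (Here $J(b)=0$ since $\mathrm{Nil}(R)$ is the only associated prime and $b\notin\mathrm{Nil}(R)$; also $\nu(y_i)>\nu(b)$ since $y_i\in\mathfrak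 p$, $b\notin\mathfrak p$.) Decomposition: let $\Delta$ be a convex subgroup of $\nu R$. Define $\nu_1(a)=\nu(a)+\Delta\in\nu R/\Delta$ (and $\infty$ if $\nu(a)=\infty$); $\nu_1$ is a valuation with a center on $R$, and $\mathfrak p=\mathfrak C_{\nu_1}(R)=\{a:\nu(a)>\delta\ \forall\delta\in\Delta\}$. Define $\nu_2$ on $R/\mathfrak p$ by $\nu_2(a+\mathfrak p)=\nu(a)$ for $a\notin\mathfrak p$, $\infty$ for $a\in\mathfrak p$. We write $\nu=\nu_1\circ\nu_2$. On a local blowing up of $R$ with respect to $\nu$, $\nu_1$ is defined by the same formula from the extension of $\nu$. *)

(* Defs.v *)
From HB Require Import structures.
From mathcomp Require Import all_boot all_order all_algebra.
Set Implicit Arguments. Unset Strict Implicit. Unset Printing Implicit Defensive.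
Import GRing.Theory.
Local Open Scope ring_scope.

Definition is_oag (G : zmodType) (le : G -> G -> Prop) : Prop :=
  (forall x, le x x) /\ (forall x y z, le x y -> le y z -> le x z) /\
  (forall x y, le x y -> le y x -> x = y) /\ (forall x y, le x y \/ le y x) /\
  (forall x y z, le x y -> le (x + z) (y + z)).

Definition glt (G : zmodType) (le : G -> G -> Prop) (x y : G) := le x y /\ x <> y.

(* option G models G ∪ {oo}, with None = oo. *)
Definition vle (G : zmodType) (le : G -> G -> Prop) (a b : option G) : Prop :=
  match b with
  | None => True
  | Some y => match a with None => False | Some x => le x y end
  end.
Definition vlt (G : zmodType) (le : G -> G -> Prop) (a b : option G) : Prop :=
  vle le a b /\ a <> b.
Definition vadd (G : zmodType) (a b : option G) : option G :=
  match a, b with Some x, Some y => Some (x + y) | _, _ => None end.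
(* a - b; only meaningful when b is finite *)
Definition vsub (G : zmodType) (a b : option G) : option G :=
  match a, b with Some x, Some y => Some (x - y) | _, _ => None end.
(* c >= min(a, b), in a total order *)
Definition vge_min (G : zmodType) (le : G -> G -> Prop) (a b : option G) (c : option G) :=
  vle le a c \/ vle le b c.

Section Rings.
Variable R : comNzRingType.

Definition is_ideal (I : R -> Prop) : Prop :=
  I 0 /\ (forall a b, I a -> I b -> I (a + b)) /\ (forall a b, I b -> I (a * b)).

Definition gen_by (n : nat) (f : 'I_n -> R) (a : R) : Prop :=
  exists c : 'I_n -> R, a = \sum_(i < n) c i * f i.

Definition is_fg (I : R -> Prop) : Prop :=
  exists n (f : 'I_n -> R), forall a, I a <-> gen_by f a.

Definition noetherian : Prop := forall I, is_ideal I -> is_fg I.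

Definition is_unit (a : R) : Prop := exists u, a * u = 1.

Definition is_local_max (m : R -> Prop) : Prop :=
  is_ideal m /\ ~ m 1 /\ (forall a, ~ m a -> is_unit a).

Definition is_prime (P : R -> Prop) : Prop :=
  is_ideal P /\ ~ P 1 /\ (forall a b, P (a * b) -> P a \/ P b).

Definition is_minimal_prime (P : R -> Prop) : Prop :=
  is_prime P /\ (forall Q, is_prime Q -> (forall a, Q a -> P a) -> forall a, P a -> Q a).

Definition is_nilpotent (a : R) : Prop := exists n, a ^+ n = 0.

Definition is_assoc (P : R -> Prop) : Prop :=
  is_prime P /\ exists x : R, forall a, P a <-> a * x = 0.

Definition nzd (s : R) : Prop := forall a, a * s = 0 -> a = 0.

Variables (G : zmodType) (le : G -> G -> Prop).

Definition is_valuation (nu : R -> option G) : Prop :=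
  (forall a b, nu (a * b) = vadd (nu a) (nu b)) /\
  (forall a b, vge_min le (nu a) (nu b) (nu (a + b))) /\
  nu 1 = Some 0 /\ nu 0 = None /\
  is_minimal_prime (fun a => nu a = None).

Definition centered (nu : R -> option G) (m : R -> Prop) : Prop :=
  (forall a, vle le (Some 0) (nu a)) /\ (forall a, m a -> vlt le (Some 0) (nu a)).

Definition is_subgroup (H : G -> Prop) : Prop :=
  H 0 /\ (forall x y, H x -> H y -> H (x - y)).

(* nu R : the subgroup of G generated by the finite values of nu *)
Definition value_group (nu : R -> option G) (g : G) : Prop :=
  forall H, is_subgroup H -> (forall a h, nu a = Some h -> H h) -> H g.

Definition convex_subgroup (nu : R -> option G) (D : G -> Prop) : Prop :=
  is_subgroup D /\ (forall g, D g -> value_group nu g) /\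
  (forall d1 d2 g, D d1 -> D d2 -> value_group nu g -> le d1 g -> le g d2 -> D g).

(* ---------- Total ring of fractions (pairs num/den) ---------- *)
Definition fracR := (R * R)%type.
Definition femb (a : R) : fracR := (a, 1).
Definition fadd (x y : fracR) : fracR := (x.1 * y.2 + y.1 * x.2, x.2 * y.2).
Definition fmul (x y : fracR) : fracR := (x.1 * y.1, x.2 * y.2).
Definition fdiv (x y : fracR) : fracR := (x.1 * y.2, x.2 * y.1).
Definition feq (x y : fracR) : Prop := x.1 * y.2 = y.1 * x.2.
Definition fval (nu : R -> option G) (x : fracR) : option G := vsub (nu x.1) (nu x.2).

(* center of nu_1 = nu modulo the convex subgroup D, on R and on fractions:
   nu_1(a) > 0  iff  nu(a) > delta for every delta in D *)
Definition Cnu1 (nu : R -> option G) (D : G -> Prop) (a : R) : Prop :=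
  forall d, D d -> vlt le (Some d) (nu a).
Definition fCnu1 (nu : R -> option G) (D : G -> Prop) (x : fracR) : Prop :=
  forall d, D d -> vlt le (Some d) (fval nu x).

(* R' = R[a_1/b, ..., a_r/b] inside R_b (J(b) = 0 here), as a subring of
   the total ring of fractions: the smallest subring containing R and the a_i/b *)
Inductive in_Rprime (b : R) (r : nat) (a : 'I_r -> R) : fracR -> Prop :=
| rp_emb c : in_Rprime b a (femb c)
| rp_gen i : in_Rprime b a (fdiv (femb (a i)) (femb b))
| rp_add x y : in_Rprime b a x -> in_Rprime b a y -> in_Rprime b a (fadd x y)
| rp_mul x y : in_Rprime b a x -> in_Rprime b a y -> in_Rprime b a (fmul x y)
| rp_eq x y : nzd y.2 -> feq x y -> in_Rprime b a x -> in_Rprime b a y.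

(* R^(1) = R'_{C_nu(R')} : fractions f/g with f, g in R', nu(g) not > 0 *)
Definition in_R1 (nu : R -> option G) (b : R) (r : nat) (a : 'I_r -> R) (x : fracR) : Prop :=
  nzd x.2 /\
  exists f g, in_Rprime b a f /\ in_Rprime b a g /\
    ~ vlt le (Some 0) (fval nu g) /\ feq x (fdiv f g).

Definition R1_gen_by (nu : R -> option G) (b : R) (r : nat) (a : 'I_r -> R)
  (n : nat) (z : 'I_n -> fracR) (x : fracR) : Prop :=
  exists c : 'I_n -> fracR, (forall i, in_R1 nu b a (c i)) /\
    feq x (\big[fadd/femb 0]_(i < n) fmul (c i) (z i)).

End Rings.

Definition ytrans (R : comNzRingType) (r s : nat) (y : 'I_(r + s) -> R) (b : R)
  (i : 'I_(r + s)) : fracR R :=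
  if (i < r)%N then fdiv (femb (y i)) (femb b) else femb (y i).

(* Main.v *)
Require Import Defs.
From HB Require Import structures.
From mathcomp Require Import all_boot all_order all_algebra.
From Stdlib Require Import Classical ClassicalEpsilon.
From mathcomp Require Import ring.
Import GRing.Theory.
Local Open Scope ring_scope.
Set Implicit Arguments. Unset Strict Implicit.

Lemma zmod_aux (G : zmodType) (al t q s1 be : G) : s1 + (be + t) = t + al + q -> al = s1 - q + be.
Proof.
move=> e; apply: (addIr (t + q)).
have -> : al + (t + q) = t + al + q by rewrite addrCA addrA.
rewrite -e addrACA [be + q]addrC addrA [s1 - q + t + q]addrAC subrK.
by rewrite -addrA [t + be]addrC.
Qed.

Section Ord.
Variables (G : zmodType) (le : G -> G -> Prop).
Hypothesis hG : is_oag le.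

Lemma le_refl x : le x x. Proof. by case: hG. Qed.
Lemma le_trans x y z : le x y -> le y z -> le x z.
Proof. by case: hG => _ [h _]; apply: h. Qed.
Lemma le_anti x y : le x y -> le y x -> x = y.
Proof. by case: hG => _ [_ [h _]]; apply: h. Qed.
Lemma le_total x y : le x y \/ le y x.
Proof. by case: hG => _ [_ [_ [h _]]]; apply: h. Qed.
Lemma le_add x y z : le x y -> le (x + z) (y + z).
Proof. by case: hG => _ [_ [_ [_ h]]]; apply: h. Qed.
Lemma le_addl x y z : le x y -> le (z + x) (z + y).
Proof. by move=> h; rewrite ![z + _]addrC; apply: le_add. Qed.
Lemma le_add2 x y z t : le x y -> le z t -> le (x + z) (y + t).
Proof. move=> h1 h2; apply: le_trans (le_add z h1) (le_addl y h2). Qed.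
Lemma le_sub x y z : le x y -> le (x - z) (y - z).
Proof. exact: le_add. Qed.
Lemma le_addr0 x c : le 0 c -> le x (x + c).
Proof. by move=> h; have := le_addl x h; rewrite addr0. Qed.

Lemma vle_trans a b c : vle le a b -> vle le b c -> vle le a c.
Proof.
case: a => [x|]; case: b => [y|]; case: c => [z|] //=.
exact: le_trans.
Qed.

Lemma vlt_le_trans a b c : vlt le a b -> vle le b c -> vlt le a c.
Proof.
case: a => [x|]; case: b => [y|]; case: c => [z|] //=; rewrite /vlt /=.
- move=> [h1 h2] h3; split; first exact: le_trans h3.
  move=> [e]; subst z; apply: h2; congr Some; exact: le_anti h1 h3.
all: by move=> [[] ].
Qed.

Lemma vadd_ge0 a b : vle le (Some 0) a -> vle le (Some 0) b -> vle le (Some 0) (vadd a b).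
Proof.
case: a => [x|]; case: b => [y|] //= h1 h2.
by rewrite -[0]addr0; apply: le_add2.
Qed.

Lemma vlt_vadd d a c : vlt le (Some d) a -> vle le (Some 0) c -> vlt le (Some d) (vadd c a).
Proof.
move=> h1 h2; apply: vlt_le_trans h1 _.
case: a => [x|]; case: c h2 => [y|] //= h2.
by rewrite addrC; apply: le_addr0.
Qed.

End Ord.

Section Frac.
Variables (R : comNzRingType) (G : zmodType) (le : G -> G -> Prop).
Hypothesis hG : is_oag le.
Variable nu : R -> option G.
Hypothesis hval : is_valuation le nu.

Lemma nuM a b : nu (a * b) = vadd (nu a) (nu b).
Proof. by case: hval => h _; apply: h. Qed.
Lemma nuD a b : vge_min le (nu a) (nu b) (nu (a + b)).
Proof. by case: hval => _ [h _]; apply: h. Qed.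
Lemma nu1 : nu 1 = Some 0. Proof. by case: hval => _ [_ [h _]]. Qed.
Lemma nu0 : nu 0 = None. Proof. by case: hval => _ [_ [_ [h _]]]. Qed.

Definition FD (x : fracR R) := nu x.2 <> None.

Lemma vsub_le (a b : option G) t : vle le a b -> vle le (vsub a (Some t)) (vsub b (Some t)).
Proof. case: a => [x|]; case: b => [y|] //=; exact: le_sub. Qed.

Lemma vsub_shift (a : option G) p q : vsub (vadd a (Some q)) (Some (p + q)) = vsub a (Some p).
Proof.
case: a => [x|] //=; congr Some.
by rewrite opprD addrACA subrr addr0.
Qed.

Lemma fval_feq x y : FD x -> FD y -> feq x y -> fval nu x = fval nu y.
Proof.
rewrite /FD /feq /fval => hx hy e.
have := congr1 nu e; rewrite !nuM.
case: (nu x.2) hx => [p|] // _; case: (nu y.2) hy => [q|] // _.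
case: (nu x.1) => [s|]; case: (nu y.1) => [s'|] //= [] e'.
congr Some; apply: (@addIr _ (p + q)).
by rewrite addrA subrK [p + q]addrC addrA subrK.
Qed.

Lemma fval_mul x y : FD x -> FD y -> fval nu (fmul x y) = vadd (fval nu x) (fval nu y).
Proof.
rewrite /FD /fval /fmul /= => hx hy; rewrite !nuM.
case: (nu x.2) hx => [p|] // _; case: (nu y.2) hy => [q|] // _.
case: (nu x.1) => [s|]; case: (nu y.1) => [s'|] //=.
by rewrite opprD addrACA.
Qed.

Lemma fval_add x y : FD x -> FD y ->
  vge_min le (fval nu x) (fval nu y) (fval nu (fadd x y)).
Proof.
rewrite /FD /fval /fadd /= => hx hy.
have := nuD (x.1 * y.2) (y.1 * x.2); rewrite /vge_min !nuM.
case: (nu x.2) hx => [p|] // _; case: (nu y.2) hy => [q|] // _ /=.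
case=> h; [left|right]; have := vsub_le (p + q) h.
  by rewrite vsub_shift.
by rewrite [p + q]addrC vsub_shift.
Qed.

Lemma FD_mul x y : FD x -> FD y -> FD (fmul x y).
Proof.
rewrite /FD /= nuM; case: (nu x.2) => [p|] // _; by case: (nu y.2).
Qed.
Lemma FD_add x y : FD x -> FD y -> FD (fadd x y).
Proof.
rewrite /FD /= nuM; case: (nu x.2) => [p|] // _; by case: (nu y.2).
Qed.

Definition NN (x : fracR R) := vle le (Some 0) (fval nu x).

Lemma NN_mul x y : FD x -> FD y -> NN x -> NN y -> NN (fmul x y).
Proof. by move=> hx hy h1 h2; rewrite /NN fval_mul //; apply: vadd_ge0. Qed.

Lemma NN_add x y : FD x -> FD y -> NN x -> NN y -> NN (fadd x y).
Proof.
move=> hx hy h1 h2; rewrite /NN; case: (fval_add hx hy) => h.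
  exact: vle_trans h1 h.
exact: vle_trans h2 h.
Qed.

Variable D : G -> Prop.

Lemma P1_mul c x : FD c -> FD x -> NN c -> fCnu1 le nu D x -> fCnu1 le nu D (fmul c x).
Proof.
move=> hc hx h1 h2 d hd; rewrite fval_mul //; apply: vlt_vadd => //; exact: h2.
Qed.

Lemma P1_add x y : FD x -> FD y -> fCnu1 le nu D x -> fCnu1 le nu D y ->
  fCnu1 le nu D (fadd x y).
Proof.
move=> hx hy h1 h2 d hd; case: (fval_add hx hy) => h.
  exact: vlt_le_trans (h1 d hd) h.
exact: vlt_le_trans (h2 d hd) h.
Qed.

End Frac.

Section RingFacts.
Variables (R : comNzRingType) (G : zmodType) (le : G -> G -> Prop).
Variable nu : R -> option G.
Hypothesis hval : is_valuation le nu.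
Hypothesis hass : forall P : R -> Prop, is_assoc P <-> (forall a, P a <-> is_nilpotent a).
Hypothesis hnoeth : noetherian R.

Lemma nu_exp a g n : nu a = Some g -> nu (a ^+ n) = Some (g *+ n).
Proof.
move=> h; elim: n => [|n IH]; first by rewrite expr0 mulr0n (nu1 hval).
by rewrite exprS (nuM hval) h IH /= mulrS.
Qed.

Lemma nil_nuNone a : is_nilpotent a -> nu a = None.
Proof.
case=> n hn; case e: (nu a) => [g|] //.
by have := nu_exp n e; rewrite hn (nu0 hval).
Qed.

Lemma nuNone_nil a : nu a = None -> is_nilpotent a.
Proof.
case: hval => _ [_ [_ [_ [_ hmin]]]] h.
have hp : is_prime (fun a : R => is_nilpotent a).
  have h1 := proj2 (hass (fun a : R => is_nilpotent a)).
  have h2 : is_assoc (fun a : R => is_nilpotent a) by apply: h1 => x; split.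
  by case: h2.
exact: (hmin _ hp nil_nuNone).
Qed.

Lemma nzd_nonnil (s : R) : nzd s -> ~ is_nilpotent s.
Proof.
move=> hs [n]; elim: n => [|n IH]; first by rewrite expr0; apply/eqP; exact: oner_neq0.
by rewrite exprSr => /hs.
Qed.

Lemma nzd_nu s : nzd s -> nu s <> None.
Proof. by move=> hs /nuNone_nil; apply: nzd_nonnil. Qed.

Lemma nzdM (s t : R) : nzd s -> nzd t -> nzd (s * t).
Proof. by move=> hs ht a; rewrite mulrA => /ht /hs. Qed.

Lemma nzd1 : nzd (1 : R).
Proof. by move=> a; rewrite mulr1. Qed.

Lemma nzdX (s : R) n : nzd s -> nzd (s ^+ n).
Proof.
move=> hs; elim: n => [|n IH]; first by rewrite expr0; exact: nzd1.
by rewrite exprS; apply: nzdM.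
Qed.

Lemma sum_delta n (f : 'I_n -> R) i : \sum_(j < n) (j == i)%:R * f j = f i.
Proof.
rewrite (bigD1 i) //= eqxx mul1r big1 ?addr0 // => j /negbTE ->.
by rewrite mul0r.
Qed.

Lemma gen_by_self n (f : 'I_n -> R) i : gen_by f (f i).
Proof. by exists (fun j => (j == i)%:R); rewrite sum_delta. Qed.

Lemma max_ann (a c : R) : c <> 0 -> a * c = 0 ->
  exists z, (z <> 0 /\ a * z = 0) /\ forall z', (z' <> 0 /\ a * z' = 0) ->
     (forall t, t * z = 0 -> t * z' = 0) -> forall t, t * z' = 0 -> t * z = 0.
Proof.
move=> hc0 hac; apply: NNPP => hnot.
pose S z := z <> 0 /\ a * z = 0.
pose Q z z' := S z' /\ (forall t, t * z = 0 -> t * z' = 0) /\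
                exists t, t * z' = 0 /\ t * z <> 0.
have H : forall z, S z -> exists z', Q z z'.
  move=> z hz; apply: NNPP => hn; apply: hnot; exists z; split => // z' hz' hinc t ht.
  apply: NNPP => hzt; apply: hn; exists z'; split => //; split => //.
  by exists t.
pose step z := epsilon (inhabits 0) (Q z).
pose sq n := iter n step c.
have hS : forall n, S (sq n).
  elim=> [|n IH] //=; have := epsilon_spec (inhabits 0) (Q (sq n)) (H _ IH).
  by case.
have hQ : forall n, Q (sq n) (sq n.+1).
  by move=> n; exact: (epsilon_spec (inhabits 0) (Q (sq n)) (H _ (hS n))).
have hmon : forall n m, (n <= m)%N -> forall t, t * sq n = 0 -> t * sq m = 0.
  move=> n m /subnK <-; elim: (m - n)%N => [|k IH] //= t ht.
  by case: (hQ (k + n)%N) => _ [h _]; apply: h; apply: IH.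
pose U t := exists n, t * sq n = 0.
have hU : is_ideal U.
  split; first by exists 0%N; rewrite mul0r.
  split.
    move=> u v [n1 h1] [n2 h2]; exists (maxn n1 n2); rewrite mulrDl.
    by rewrite (hmon _ _ (leq_maxl n1 n2) _ h1) (hmon _ _ (leq_maxr n1 n2) _ h2) addr0.
  by move=> u v [n h]; exists n; rewrite -mulrA h mulr0.
have [N [f hf]] := hnoeth hU.
have hfi : forall i, exists n, f i * sq n = 0.
  by move=> i; apply/hf; exact: gen_by_self.
pose ni i := proj1_sig (constructive_indefinite_description _ (hfi i)).
have hni : forall i, f i * sq (ni i) = 0.
  by move=> i; exact: (proj2_sig (constructive_indefinite_description _ (hfi i))).
pose M := (\max_(i < N) ni i)%N.
have hM : forall i, f i * sq M = 0.
  by move=> i; apply: (hmon _ _ (leq_bigmax i)); apply: hni.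
case: (hQ M) => _ [_ [t [ht1 ht2]]]; apply: ht2.
have : U t by exists M.+1.
move/hf => [cc ->]; rewrite mulr_suml big1 // => i _.
by rewrite -mulrA hM mulr0.
Qed.

Lemma nonnil_nzd (a : R) : ~ is_nilpotent a -> nzd a.
Proof.
move=> hna c hc; apply: NNPP => hc0.
have [z [[hz0 haz] hmax]] := max_ann hc0 (etrans (mulrC _ _) hc).
pose P t := t * z = 0.
have hP : is_assoc P.
  split; last by exists z.
  split.
    split; first by rewrite /P mul0r.
    split; first by move=> u v hu hv; rewrite /P mulrDl hu hv addr0.
    by move=> u v hv; rewrite /P -mulrA hv mulr0.
  split; first by rewrite /P mul1r.
  move=> u v huv; case: (classic (P u)) => hu; first by left.
  right; apply: (hmax (u * z)).
  - split; first exact: hu.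
    by rewrite mulrCA haz mulr0.
  - by move=> t ht; rewrite mulrCA ht mulr0.
  - by rewrite mulrA [v * u]mulrC.
by apply: hna; apply/((proj1 (hass P)) hP).
Qed.

Lemma nu_nzd a : nu a <> None -> nzd a.
Proof. by move=> h; apply: nonnil_nzd => /nil_nuNone. Qed.

End RingFacts.

Section Main.
Variables (R : comNzRingType) (G : zmodType) (le : G -> G -> Prop).
Hypothesis hG : is_oag le.
Variable nu : R -> option G.
Hypothesis hval : is_valuation le nu.
Hypothesis hge0 : forall a, vle le (Some 0) (nu a).
Variable D : G -> Prop.
Hypothesis hD : convex_subgroup le nu D.
Hypothesis hass : forall P : R -> Prop, is_assoc P <-> (forall a, P a <-> is_nilpotent a).
Hypothesis hnoeth : noetherian R.
Variables (r s : nat) (y : 'I_(r + s) -> R).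
Hypothesis hgen : forall a, Cnu1 le nu D a <-> gen_by y a.
Variable b : R.
Hypothesis hb : ~ Cnu1 le nu D b.
Let a := fun i : 'I_r => y (lshift s i).

Lemma D0 : D 0. Proof. by case: hD => [[]]. Qed.
Lemma DD x z : D x -> D z -> D (x + z).
Proof.
case: hD => [[h0 hs]] _ hx hz; have := hs _ _ hx (hs _ _ h0 hz).
by rewrite sub0r opprK.
Qed.

Lemma notCnu1 u : ~ Cnu1 le nu D u -> exists beta d0, nu u = Some beta /\ D d0 /\ le beta d0.
Proof.
move=> hb'; apply: NNPP => hn; apply: hb' => d hd.
case e: (nu u) => [beta|]; last by split.
case: (le_total hG d beta) => h.
  split => //; move=> [ed]; apply: hn; exists beta, beta; split => //.
  rewrite -ed; split => //; exact: le_refl.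
by case: hn; exists beta, d.
Qed.

Lemma hb_val : exists beta d0, nu b = Some beta /\ D d0 /\ le beta d0.
Proof. exact: notCnu1. Qed.

Lemma nzd_b : nzd b.
Proof. have [beta [d0 [e _]]] := hb_val. by apply: (nu_nzd hval hass hnoeth); rewrite e. Qed.

Lemma Cnu1_y j : Cnu1 le nu D (y j).
Proof. by apply/hgen; apply: gen_by_self. Qed.

Lemma P1_NN x : fCnu1 le nu D x -> NN le nu x.
Proof. by move=> h; case: (h _ D0). Qed.

Lemma P1_ydivb j : fCnu1 le nu D (fdiv (femb (y j)) (femb b)).
Proof.
have [beta [d0 [eb [hd0 hle]]]] := hb_val.
move=> d hd; rewrite /fval /= mulr1 mul1r eb.
have := Cnu1_y j (DD hd hd0).
case: (nu (y j)) => [g|] //= [h1 h2]; split.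
  have h3 : le (d + beta) g := le_trans hG (le_addl hG d hle) h1.
  by have := le_sub hG beta h3; rewrite addrK.
move=> [e]; have eg : g = d + beta by rewrite e subrK.
apply: h2; congr Some; apply: (le_anti hG h1); rewrite eg; exact: le_addl.
Qed.

Lemma P1_femb c : fCnu1 le nu D (femb c) <-> Cnu1 le nu D c.
Proof.
rewrite /fCnu1 /Cnu1 /fval /= (nu1 hval).
by case: (nu c) => [g|] /=; rewrite ?subr0.
Qed.

Lemma FD_nzd x : nzd x.2 -> FD nu x.
Proof. exact: (nzd_nu hval hass). Qed.

Lemma Rp_nzd u : in_Rprime b a u -> nzd u.2.
Proof.
elim=> //=.
- move=> _; exact: nzd1.
- move=> _; rewrite mul1r; exact: nzd_b.
- by move=> x z _ h1 _ h2; apply: nzdM.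
- by move=> x z _ h1 _ h2; apply: nzdM.
Qed.

Lemma Rp_NN u : in_Rprime b a u -> NN le nu u.
Proof.
elim=> //=.
- move=> c; rewrite /NN /fval /= (nu1 hval); have := hge0 c.
  by case: (nu c) => [g|] //=; rewrite subr0.
- by move=> i; apply: P1_NN; apply: P1_ydivb.
- move=> x z hx h1 hz h2; apply: NN_add => //; apply: FD_nzd; exact: Rp_nzd.
- move=> x z hx h1 hz h2; apply: NN_mul => //; apply: FD_nzd; exact: Rp_nzd.
- move=> x z hz2 e hx h; rewrite /NN -(fval_feq hval (FD_nzd (Rp_nzd hx)) (FD_nzd hz2) e).
  exact: h.
Qed.



Lemma Rp_zero n : in_Rprime b a (0, b ^+ n).
Proof.
apply: (@rp_eq _ _ _ _ (femb 0)).
- exact: nzdX nzd_b.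
- by rewrite /feq /= !mul0r.
- exact: rp_emb.
Qed.

Lemma Rp_b0 c : in_Rprime b a (c, b ^+ 0).
Proof.
apply: (@rp_eq _ _ _ _ (femb c)).
- by rewrite /= expr0; exact: nzd1.
- by rewrite /feq /= expr0.
- exact: rp_emb.
Qed.

Lemma decomp u : in_Rprime b a u -> exists k (c : R) (Gs : 'I_r -> R),
  u.1 * b ^+ k.+1 = (c * b ^+ k.+1 + \sum_(i < r) a i * Gs i) * u.2 /\
  forall i, in_Rprime b a (Gs i, b ^+ k).
Proof.
elim.
- move=> c; exists 0%N, c, (fun _ => 0); split; last by move=> i; exact: Rp_zero.
  by rewrite big1 ?addr0 ?mulr1 //= => i _; rewrite mulr0.
- move=> i; exists 0%N, 0, (fun j => (j == i)%:R); split; last by move=> j; exact: Rp_b0.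
  rewrite /=.
  have -> : \sum_(j < r) a j * (j == i)%:R = a i.
    by rewrite -(sum_delta a i); apply: eq_bigr => j _; rewrite mulrC.
  by rewrite expr1; ring.
- move=> x z hx [k1 [c1 [G1 [E1 H1]]]] hz [k2 [c2 [G2 [E2 H2]]]].
  exists (k1.+1 + k2)%N, (c1 + c2), (fun i => G1 i * b ^+ k2.+1 + G2 i * b ^+ k1.+1).
  split.
    rewrite -addnS exprD /=.
    have -> : \sum_(i < r) a i * (G1 i * b ^+ k2.+1 + G2 i * b ^+ k1.+1) =
      (\sum_(i < r) a i * G1 i) * b ^+ k2.+1 + (\sum_(i < r) a i * G2 i) * b ^+ k1.+1.
      by rewrite !mulr_suml -big_split; apply: eq_bigr => i _ /=; ring.
    transitivity ((x.1 * b ^+ k1.+1) * (b ^+ k2.+1 * z.2) + (z.1 * b ^+ k2.+1) * (b ^+ k1.+1 * x.2)).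
      by rewrite /=; ring.
    by rewrite E1 E2; ring.
  move=> i; apply: (@rp_eq _ _ _ _ (fadd (G1 i, b ^+ k1) (G2 i, b ^+ k2))).
  - exact: nzdX nzd_b.
  - by rewrite /feq /= exprD !exprS; ring.
  - exact: rp_add.
- move=> x z hx [k1 [c1 [G1 [E1 H1]]]] hz [k2 [c2 [G2 [E2 H2]]]].
  exists (k1.+1 + k2)%N, (c1 * c2),
    (fun i => c1 * b ^+ k1.+1 * G2 i + G1 i * (c2 * b ^+ k2.+1 + \sum_(j < r) a j * G2 j)).
  split.
    rewrite -addnS exprD /=.
    have -> : \sum_(i < r) a i * (c1 * b ^+ k1.+1 * G2 i +
                G1 i * (c2 * b ^+ k2.+1 + \sum_(j < r) a j * G2 j)) =
      c1 * b ^+ k1.+1 * (\sum_(i < r) a i * G2 i) +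
      (\sum_(i < r) a i * G1 i) * (c2 * b ^+ k2.+1 + \sum_(j < r) a j * G2 j).
      by rewrite mulr_sumr mulr_suml -big_split; apply: eq_bigr => i _ /=; ring.
    transitivity ((x.1 * b ^+ k1.+1) * (z.1 * b ^+ k2.+1)); first by rewrite /=; ring.
    by rewrite E1 E2; ring.
  move=> i.
  have hA : in_Rprime b a (c2 * b ^+ k2.+1 + \sum_(j < r) a j * G2 j, b ^+ k2.+1).
    apply: (rp_eq _ _ hz) => //; exact: nzdX nzd_b.
  apply: (@rp_eq _ _ _ _ (fadd (fmul (femb c1) (G2 i, b ^+ k2))
                 (fmul (G1 i, b ^+ k1) (c2 * b ^+ k2.+1 + \sum_(j < r) a j * G2 j, b ^+ k2.+1)))).
  - exact: nzdX nzd_b.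
  - by rewrite /feq /= exprD !exprS; ring.
  - by apply: rp_add; apply: rp_mul => //; exact: rp_emb.
- move=> x z hz2 e hx [k [c [Gs [E hG']]]]; exists k, c, Gs; split => //.
  have hx2 := Rp_nzd hx.
  apply/eqP; rewrite -subr_eq0; apply/eqP; apply: hx2.
  move: e; rewrite /feq => e.
  set A := (c * b ^+ k.+1 + \sum_(i < r) a i * Gs i) in E *.
  transitivity (z.1 * x.2 * b ^+ k.+1 - A * x.2 * z.2); first ring.
  rewrite -e; transitivity ((x.1 * b ^+ k.+1 - A * x.2) * z.2); first ring.
  by rewrite E subrr mul0r.
Qed.

Lemma Cnu1_0 : Cnu1 le nu D 0.
Proof. by move=> d hd; rewrite (nu0 hval). Qed.

Lemma Cnu1_add u v : Cnu1 le nu D u -> Cnu1 le nu D v -> Cnu1 le nu D (u + v).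
Proof.
move=> hu hv d hd; case: (nuD hval u v) => h.
  exact: vlt_le_trans (hu _ hd) h.
exact: vlt_le_trans (hv _ hd) h.
Qed.

Lemma Cnu1_mul w v : Cnu1 le nu D v -> Cnu1 le nu D (w * v).
Proof. by move=> hv d hd; rewrite (nuM hval); apply: vlt_vadd => //; apply: hv. Qed.

Lemma Cnu1_prime u v : Cnu1 le nu D (u * v) -> Cnu1 le nu D u \/ Cnu1 le nu D v.
Proof.
move=> huv; apply: NNPP => hn.
have [g1 [d1 [e1 [hd1 l1]]]] := notCnu1 (fun h => hn (or_introl h)).
have [g2 [d2 [e2 [hd2 l2]]]] := notCnu1 (fun h => hn (or_intror h)).
have := huv _ (DD hd1 hd2); rewrite (nuM hval) e1 e2 /= => [[h1 h2]].
apply: h2; congr Some; apply: (le_anti hG h1); exact: le_add2.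
Qed.

Lemma not_Cnu1_bX n : ~ Cnu1 le nu D (b ^+ n).
Proof.
elim: n => [|n IH].
  rewrite expr0 => h; have := h _ D0; rewrite (nu1 hval) => [[_]]; by apply.
by rewrite exprS => /Cnu1_prime [].
Qed.

Lemma g_facts g : in_Rprime b a g -> ~ vlt le (Some 0) (fval nu g) ->
  exists t, nu g.1 = Some t /\ nu g.2 = Some t.
Proof.
move=> hg hn; have := Rp_NN hg; have := FD_nzd (Rp_nzd hg).
rewrite /NN /FD /fval in hn *.
case: (nu g.2) hn => [q|] // hn _; case: (nu g.1) hn => [p|] /= hn.
  move=> h; exists p; split => //; congr Some; apply/esym/subr0_eq.
  apply: NNPP => hne; apply: hn; split => //; by move=> [/esym].
by case: hn; split.
Qed.

Lemma R1_NN c : in_R1 le nu b a c -> NN le nu c /\ FD nu c.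
Proof.
move=> [hc2 [f [g [hf [hg [hng e]]]]]].
have hFc := FD_nzd hc2.
have [t [e1 e2]] := g_facts hg hng.
have hFf := FD_nzd (Rp_nzd hf).
have hFg : FD nu (g.2, g.1) by rewrite /FD /= e1.
split => //.
have hFd : FD nu (fdiv f g) by apply: (FD_mul hval) hFf hFg.
rewrite /NN (fval_feq hval hFc hFd e) (fval_mul hval hFf hFg).
apply: vadd_ge0 => //; first exact: Rp_NN.
by rewrite /fval /= e1 e2 /= subrr; exact: le_refl.
Qed.

Lemma sum_rep n (F : 'I_n -> fracR R) (v : 'I_n -> R) w :
  (forall i, (F i).1 * w = v i * (F i).2) ->
  (\big[@fadd R/femb 0]_(i < n) F i).1 * w = (\sum_(i < n) v i) * (\big[@fadd R/femb 0]_(i < n) F i).2.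
Proof.
move=> h.
pose Q (z : fracR R) (V : R) := z.1 * w = V * z.2.
apply: (@big_ind2 _ _ Q (femb 0) (@fadd R) 0 +%R).
- by rewrite /Q /= !mul0r.
- move=> x1 x2 y1 y2; rewrite /Q /= => e1 e2.
  transitivity ((x1.1 * w) * y1.2 + (y1.1 * w) * x1.2); first ring.
  by rewrite e1 e2; ring.
- by move=> i _; apply: h.
Qed.

Lemma split_l (i : 'I_r) : split (lshift s i) = inl i.
Proof. exact: (@unsplitK r s (inl i)). Qed.
Lemma split_r (i : 'I_s) : split (rshift r i) = inr i.
Proof. exact: (@unsplitK r s (inr i)). Qed.

Lemma main_sec x : in_R1 le nu b a x ->
  (fCnu1 le nu D x <-> R1_gen_by le nu b a (ytrans y b) x).
Proof.
move=> hx; have [hx2 [f [g [hf [hg [hng hxe]]]]]] := hx.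
have [t [eg1 eg2]] := g_facts hg hng.
have hg1 : nzd g.1 by apply: (nu_nzd hval hass hnoeth); rewrite eg1.
have hf2 := Rp_nzd hf.
split.
- move=> hP.
  have [k [c [Gs [Ef HG]]]] := decomp hf.
  set B := b ^+ k.+1 in Ef.
  set A := c * B + \sum_(i < r) a i * Gs i in Ef.
  have hBnzd : nzd B by exact: nzdX nzd_b.
  have Ex : x.1 * (B * g.1) = (g.2 * A) * x.2.
    apply/eqP; rewrite -subr_eq0; apply/eqP; apply: hf2.
    move: hxe; rewrite /feq /= => hxe.
    transitivity (B * (x.1 * (f.2 * g.1)) - g.2 * x.2 * (A * f.2)); first ring.
    rewrite hxe -Ef; ring.
  have hCA : Cnu1 le nu D A.
    move=> d hd; have := hP _ hd; rewrite /fval.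
    have := congr1 nu Ex; rewrite !(nuM hval) eg1 eg2.
    have := FD_nzd hx2; rewrite /FD; case: (nu x.2) => [q|] // _.
    have := hge0 B; have := nzd_nu hval hass hBnzd.
    case: (nu B) => [be|] // _ hbe.
    case: (nu A) => [al|]; last by move=> _ _; split.
    case: (nu x.1) => [s1|] //= [] e hlt.


    apply: (vlt_le_trans hG hlt) => /=.
    rewrite (zmod_aux e).
    exact: le_addr0 hG _ _ hbe.
  have hCS : Cnu1 le nu D (\sum_(i < r) a i * Gs i).
    apply: big_ind => //; first exact: Cnu1_0.
      exact: Cnu1_add.
    by move=> i _; rewrite mulrC; apply: Cnu1_mul; apply: Cnu1_y.
  have hcB : Cnu1 le nu D (c * B).
    have -> : c * B = A + (-1) * \sum_(i < r) a i * Gs i by rewrite /A; ring.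
    by apply: Cnu1_add => //; apply: Cnu1_mul.
  have hc : Cnu1 le nu D c.
    by case: (Cnu1_prime hcB) => // /not_Cnu1_bX.
  have [e He] := proj1 (hgen c) hc.
  pose beta (j : 'I_(r + s)) := if (j < r)%N then b else 1.
  pose Gext (j : 'I_(r + s)) := match split j with inl i => Gs i | inr _ => 0 end.
  pose H j := fadd (femb (e j * beta j)) (Gext j, b ^+ k).
  have hH : forall j, in_Rprime b a (H j).
    move=> j; apply: rp_add; first exact: rp_emb.
    rewrite /Gext; case: split_ordP => i _; [exact: HG | exact: Rp_zero].
  exists (fun j => fdiv (H j) g); split.
    move=> j; split.
      by rewrite /= mul1r; apply: nzdM => //; exact: nzdX nzd_b.
    by exists (H j), g; do 3!split => //.
  pose v (j : 'I_(r + s)) := (e j * B + Gext j) * g.2 * y j.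
  have hsum := @sum_rep _ (fun j => fmul (fdiv (H j) g) (ytrans y b j)) v (B * g.1).
  have hv : \sum_(j < r + s) v j = g.2 * A.
    rewrite (eq_bigr (fun j => g.2 * (B * (e j * y j)) + g.2 * (Gext j * y j))); last first.
      by move=> j _; rewrite /v; ring.
    rewrite big_split /= -!mulr_sumr -He big_split_ord /=.
    rewrite (eq_bigr (fun i => a i * Gs i)); last by move=> i _; rewrite /Gext split_l mulrC.
    rewrite [\sum_(i < s) _]big1; last by move=> i _; rewrite /Gext split_r mul0r.
    by rewrite addr0 /A; ring.
  rewrite hv in hsum.
  set S := \big[@fadd R/femb 0]_(i < r + s) _.
  have hS : S.1 * (B * g.1) = g.2 * A * S.2.
    apply: hsum => j.
    rewrite /v /H /ytrans /Gext /beta /=; case: split_ordP => i -> /=;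
      rewrite /B exprS; ring.
  have hw : nzd (B * g.1) by apply: nzdM.
  rewrite /feq; apply/eqP; rewrite -subr_eq0; apply/eqP; apply: hw.
  transitivity (S.2 * (x.1 * (B * g.1)) - x.2 * (S.1 * (B * g.1))); first ring.
  by rewrite Ex hS; ring.
- move=> [cc [hcc hfeq]].
  set S := \big[@fadd R/femb 0]_(i < r + s) _ in hfeq.
  have hS : FD nu S /\ fCnu1 le nu D S.
    rewrite /S; apply: (big_ind (fun z => FD nu z /\ fCnu1 le nu D z)).
    - split; first by rewrite /FD /= (nu1 hval).
      move=> d hd; rewrite /fval /= (nu0 hval) (nu1 hval) /=; split => //; discriminate.
    - move=> u w [h1 h2] [h3 h4]; split; first exact: (FD_add hval).
      exact: (P1_add hG hval).
    - move=> j _.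
      have [hN hF] := R1_NN (hcc j).
      have hz : FD nu (ytrans y b j) /\ fCnu1 le nu D (ytrans y b j).
        rewrite /ytrans; case: ifP => _.
          split; last exact: P1_ydivb.
          by rewrite /FD /= mul1r; exact: (nzd_nu hval hass nzd_b).
        split; first by rewrite /FD /= (nu1 hval).
        by apply/P1_femb; apply: Cnu1_y.
      case: hz => hz1 hz2; split; first exact: (FD_mul hval).
      exact: (P1_mul hG hval).
  case: hS => hS1 hS2 d hd.
  rewrite (fval_feq hval (FD_nzd hx2) hS1 hfeq); exact: hS2.
Qed.

End Main.

Theorem mainTheorem14
  (R : comNzRingType) (m : R -> Prop)
  (hloc : is_local_max m) (hnoeth : noetherian R)
  (G : zmodType) (le : G -> G -> Prop) (hG : is_oag le)
  (nu : R -> option G) (hval : is_valuation le nu) (hcent : centered le nu m)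
  (D : G -> Prop) (hD : convex_subgroup le nu D)
  (hass : forall P : R -> Prop, is_assoc P <-> (forall a, P a <-> is_nilpotent a))
  (r s : nat) (y : 'I_(r + s) -> R)
  (hgen : forall a, Cnu1 le nu D a <-> gen_by y a)
  (b : R) (hb : ~ Cnu1 le nu D b) :
  let a := fun i : 'I_r => y (lshift s i) in
  forall x : fracR R, in_R1 le nu b a x ->
    (fCnu1 le nu D x <-> R1_gen_by le nu b a (ytrans y b) x).
Proof.
move=> a x hx.
exact: (main_sec hG hval (proj1 hcent) hD hass hnoeth hgen hb hx).
Qed.
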